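(* If $f:2^\omega\to\mathbb R$ is continuous and $g:2^\omega\to\mathbb R$ is non-constant, then $f\le_{\mathbf m} g$.
   Context: Questions: for $y\in\mathbb R$, $p\in\mathbb Q$, $\varepsilon\in\mathbb Q^+$, a bit $b\in\{0,1\}$ is a correct answer to ''$y\lesssim_\varepsilon p$'' if either $b=1$ and $y<p+\varepsilon$, or $b=0$ and $y>p-\varepsilon$. $f\le_{\mathbf m} g$ means: for every $p\in\mathbb Q,\varepsilon\in\mathbb Q^+$ there are $q\in\mathbb Q,\delta\in\mathbb Q^+$ and a continuous $k:2^\omega\to2^\omega$ such that for every $A\in2^\omega$, every correct answer to $g(k(A))\lesssim_\delta q$ is a correct answer to $f(A)\lesssim_\varepsilon p$. *)

(* Defs.v *)
From Stdlib Require Import Reals QArith Qreals.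
Open Scope R_scope.

Definition Cantor := nat -> bool.

Definition agree (n : nat) (A B : Cantor) : Prop :=
  forall i, (i < n)%nat -> A i = B i.

Definition cont_CC (k : Cantor -> Cantor) : Prop :=
  forall (A : Cantor) (n : nat), exists m : nat,
    forall B : Cantor, agree m A B -> agree n (k A) (k B).

Definition cont_CR (f : Cantor -> R) : Prop :=
  forall (A : Cantor) (e : R), 0 < e -> exists m : nat,
    forall B : Cantor, agree m A B -> Rabs (f B - f A) < e.

(* b is a correct answer to "y <~_eps p". *)
Definition correct_answer (y : R) (p eps : Q) (b : bool) : Prop :=
  (b = true /\ y < Q2R p + Q2R eps) \/ (b = false /\ y > Q2R p - Q2R eps).

Definition m_reducible (f g : Cantor -> R) : Prop :=
  forall (p eps : Q), (0 < eps)%Q ->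
    exists (q delta : Q), (0 < delta)%Q /\
      exists k : Cantor -> Cantor, cont_CC k /\
        forall (A : Cantor) (b : bool),
          correct_answer (g (k A)) q delta b -> correct_answer (f A) p eps b.

(* Main.v *)
Require Import Defs.
From Stdlib Require Import Reals QArith Qreals.
From Stdlib Require Import Lra Lia ClassicalEpsilon Classical.
Open Scope R_scope.

Lemma rat_sep (x y : R) : x < y ->
  exists q d : Q, (0 < d)%Q /\ x < Q2R q - Q2R d /\ Q2R q + Q2R d < y.
Proof.
  intros Hxy.
  set (M := up (3 / (y - x))).
  destruct (archimed (3 / (y - x))) as [H1 _].
  fold M in H1.
  assert (Hd : 0 < 3 / (y - x)) by (apply Rdiv_lt_0_compat; lra).
  assert (HM : (0 < M)%Z) by (apply lt_IZR; lra).
  set (n := Z.to_pos M).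
  assert (Hn : IZR (Zpos n) = IZR M) by (unfold n; rewrite Z2Pos.id; auto).
  set (z := up (x * IZR M)).
  destruct (archimed (x * IZR M)) as [H2 H3]. fold z in H2, H3.
  exists ((z + 1) # n)%Q, (1 # n)%Q.
  assert (HMr : 0 < IZR M) by (apply IZR_lt; lia).
  unfold Q2R; simpl. rewrite Hn.
  split. { unfold Qlt; simpl; lia. }
  rewrite plus_IZR.
  assert (Hk : 3 < (y - x) * IZR M).
  { apply Rmult_lt_compat_l with (r := y - x) in H1; [|lra].
    field_simplify in H1; lra. }
  assert (E1 : (IZR z + 1) * / IZR M - 1 * / IZR M = IZR z / IZR M) by (field; lra).
  assert (E2 : (IZR z + 1) * / IZR M + 1 * / IZR M = (IZR z + 2) / IZR M) by (field; lra).
  rewrite E1, E2. split.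
  - apply Rmult_lt_reg_r with (IZR M); auto.
    unfold Rdiv; rewrite Rmult_assoc, Rinv_l; lra.
  - apply Rmult_lt_reg_r with (IZR M); auto.
    unfold Rdiv; rewrite Rmult_assoc, Rinv_l; lra.
Qed.

Lemma least_ex (P : nat -> Prop) n : P n -> exists m, P m /\ forall k, P k -> (m <= k)%nat.
Proof.
  revert n. induction n as [n IH] using (well_founded_induction Wf_nat.lt_wf).
  intros Pn. destruct (classic (exists k, (k < n)%nat /\ P k)) as [[k [Hk Pk]]|Hno].
  - exact (IH k Hk Pk).
  - exists n. split; auto. intros k Pk.
    destruct (Nat.lt_ge_cases k n); auto. exfalso; apply Hno; eauto.
Qed.

Theorem mainTheorem18 (f g : Cantor -> R) :
  cont_CR f -> (exists A B : Cantor, g A <> g B) -> m_reducible f g.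
Proof.
  intros Hf [A1 [B1 Hne]] p eps Heps.
  assert (HXY : exists X Y, g X < g Y).
  { destruct (Rlt_or_le (g A1) (g B1)).
    - eauto.
    - exists B1, A1. lra. }
  destruct HXY as [X [Y HXY]].
  destruct (rat_sep _ _ HXY) as [q [delta [Hd [Hq1 Hq2]]]].
  exists q, delta. split; [exact Hd|].
  assert (Hepsr : 0 < Q2R eps).
  { replace 0 with (Q2R 0) by (unfold Q2R; simpl; lra). apply Qlt_Rlt; auto. }
  set (U := fun m A => forall B, agree m A B -> f B < Q2R p + Q2R eps).
  set (V := fun m A => forall B, agree m A B -> f B > Q2R p - Q2R eps).
  set (P := fun m A => U m A \/ V m A).
  assert (HP : forall A, exists m, P m A /\ forall k, P k A -> (m <= k)%nat).
  { intros A. destruct (Hf A (Q2R eps) Hepsr) as [m Hm].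
    apply (least_ex (fun m => P m A) m).
    destruct (Rle_or_lt (f A) (Q2R p)).
    - left. intros B HB. specialize (Hm B HB). apply Rabs_def2 in Hm. lra.
    - right. intros B HB. specialize (Hm B HB). apply Rabs_def2 in Hm. lra. }
  set (mf := fun A => proj1_sig (constructive_indefinite_description _ (HP A))).
  assert (Hmf : forall A, P (mf A) A /\ forall k, P k A -> (mf A <= k)%nat).
  { intros A. unfold mf. destruct (constructive_indefinite_description _ (HP A)); auto. }
  set (D := fun A => if excluded_middle_informative (U (mf A) A) then true else false).
  exists (fun A => if D A then X else Y).
  assert (agree_le : forall m m' A B, (m' <= m)%nat -> agree m A B -> agree m' A B).
  { intros m m' A B Hle H i Hi. apply H. lia. }
  assert (agree_tr : forall m A B C, agree m A B -> agree m B C -> agree m A C).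
  { intros m A B C H1 H2 i Hi. rewrite H1, H2; auto. }
  assert (agree_sym : forall m A B, agree m A B -> agree m B A).
  { intros m A B H i Hi. symmetry; auto. }
  assert (Hloc : forall A B, agree (mf A) A B -> mf B = mf A /\
             (U (mf A) A <-> U (mf B) B)).
  { intros A B HAB.
    assert (Hsh : forall m, (m <= mf A)%nat -> (U m A <-> U m B) /\ (V m A <-> V m B)).
    { intros m Hm. assert (Hab : agree m A B) by (eapply agree_le; eauto).
      unfold U, V; split; split; intros H C HC; apply H;
        eauto. }
    destruct (Hmf A) as [PA LA]. destruct (Hmf B) as [PB LB].
    assert (Hle : (mf B <= mf A)%nat).
    { apply LB. destruct (Hsh (mf A) (le_n _)) as [[] []].
      destruct PA; [left|right]; auto. }
    assert (Hge : (mf A <= mf B)%nat).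
    { apply LA. destruct (Hsh (mf B) Hle) as [[] []].
      destruct PB; [left|right]; auto. }
    assert (E : mf B = mf A) by lia. split; auto. rewrite E. apply Hsh; lia. }
  split.
  - intros A n. exists (mf A). intros B HB.
    destruct (Hloc A B HB) as [E Hiff].
    assert (D B = D A).
    { unfold D. destruct (excluded_middle_informative (U (mf A) A));
      destruct (excluded_middle_informative (U (mf B) B)); auto; tauto. }
    rewrite H. intros i Hi; reflexivity.
  - intros A b Hb. unfold D in Hb. unfold correct_answer in *.
    destruct (excluded_middle_informative (U (mf A) A)) as [HU|HU].
    + destruct Hb as [[-> _]|[_ Hb]]; [|lra].
      left. split; auto. apply HU. intros i Hi; auto.
    + destruct Hb as [[_ Hb]|[-> _]]; [lra|].
      right. split; auto. destruct (proj1 (Hmf A)) as [H|H]; [tauto|].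
      apply H. intros i Hi; auto.
Qed.
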